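(* Let $f:\mathcal X\to\mathbb R$ be bounded and measurable and let $Q$ be a probability distribution on $\mathcal X$. Then for any $\delta\in(0,1]$ and $\varepsilon>0$: (a) $Q(\{x\in\mathcal X:f(x)\le\varepsilon L_{f/\varepsilon}-\varepsilon\log(1/\delta)-\varepsilon D_{\sup\text{-}\log}(P_{f/\varepsilon},Q)\})\le\delta$; (b) $Q(\{x\in\mathcal X:f(x)\le\varepsilon L_{f/\varepsilon}-\varepsilon\log(1/\delta)\})\le\delta+D_{\mathrm{TV}}(P_{f/\varepsilon},Q)$; (c) if $f$ is Lipschitz with minimal Lipschitz constant $|f|_1$, then $Q(\{x\in\mathcal X:f(x)<\varepsilon L_{f/\varepsilon}-\varepsilon\log(2/\delta)-2\delta^{-1}|f|_1W_1(P_{f/\varepsilon},Q)\})\le\delta$.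
   Context: $\mathcal X=[0,1]^d$ with Lebesgue measure. For bounded measurable $h$: $Z_h=\int_{\mathcal X}e^h dx$, $L_h=\log Z_h$, $P_h$ the distribution with density $e^h/Z_h$. $D_{\sup\text{-}\log}(P,Q)=\|\log(dP/dQ)\|_\infty$ ($\infty$ unless mutually absolutely continuous); $D_{\mathrm{TV}}(P,Q)=\sup_A|P(A)-Q(A)|$; $W_1(P,Q)=\inf_{X\sim P,Y\sim Q}\mathbb E\|X-Y\|_2$. Lipschitz constants are with respect to the Euclidean norm. *)

(* Defs.v *)
From HB Require Import structures.
From mathcomp Require Import all_boot all_order all_algebra.
From mathcomp Require Import all_classical all_reals all_analysis.
Set Implicit Arguments. Unset Strict Implicit. Unset Printing Implicit Defensive.
Import Order.TTheory GRing.Theory Num.Theory.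
Import numFieldNormedType.Exports.
Local Open Scope classical_set_scope.
Local Open Scope ring_scope.

Section Defs.
Context {R : realType} {d : nat}.
Notation T := (d.-tuple R).

Definition cube : set T := [set x | forall i : 'I_d, 0 <= tnth x i <= 1].

Definition euclid (x y : T) : R :=
  Num.sqrt (\sum_(i < d) (tnth x i - tnth y i) ^+ 2).

(* lam is (the) Lebesgue measure on the product sigma-algebra of R^d:
   it gives every box ]a,b] its volume.  This determines lam uniquely. *)
Definition is_lebesgue (lam : set T -> \bar R) : Prop :=
  forall a b : T, (forall i, tnth a i <= tnth b i) ->
    lam [set x | forall i, tnth a i < tnth x i <= tnth b i] =
    (\prod_(i < d) (tnth b i - tnth a i))%:E.

Definition Zh (lam : {measure set T -> \bar R}) (h : T -> R) : R :=
  Rintegral lam cube (fun x => expR (h x)).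
Definition Lh (lam : {measure set T -> \bar R}) (h : T -> R) : R :=
  ln (Zh lam h).
Definition Ph (lam : {measure set T -> \bar R}) (h : T -> R) (A : set T) : \bar R :=
  (\int[lam]_(x in A `&` cube) (expR (h x) / Zh lam h)%:E)%E.

(* D_{sup-log}(P,Q) = || log dP/dQ ||_oo (ess. sup w.r.t. Q), +oo unless
   P and Q are mutually absolutely continuous: the infimum of the c >= 0
   such that dP/dQ = e^g with |g| <= c Q-a.e. *)
Definition Dsuplog (P : set T -> \bar R) (Q : probability T R) : \bar R :=
  ereal_inf [set c%:E | c in [set c : R | 0 <= c /\
     exists g : T -> R, measurable_fun setT g /\
       (forall A, measurable A -> P A = (\int[Q]_(x in A) (expR (g x))%:E)%E) /\
       {ae Q, forall x, `|g x| <= c}]].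

Definition Dtv (P : set T -> \bar R) (Q : probability T R) : \bar R :=
  ereal_sup [set `|(P A - Q A)%E|%E | A in [set A : set T | measurable A]].

Definition coupling (pi : probability (T * T)%type R) (P : set T -> \bar R)
    (Q : probability T R) : Prop :=
  (forall A, measurable A -> pi (A `*` setT) = P A) /\
  (forall B, measurable B -> pi (setT `*` B) = Q B).
Definition W1 (P : set T -> \bar R) (Q : probability T R) : \bar R :=
  ereal_inf [set e | exists pi : probability (T * T)%type R,
     coupling pi P Q /\ e = (\int[pi]_z (euclid z.1 z.2)%:E)%E].

Definition lipschitz_on_cube (f : T -> R) (L : R) : Prop :=
  0 <= L /\ forall x y, cube x -> cube y -> `|f x - f y| <= L * euclid x y.
Definition lip_const (f : T -> R) : R := inf [set L | lipschitz_on_cube f L].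

End Defs.

(* Main.v *)
Set Warnings "-notation-overridden,-ambiguous-paths,-notation-incompatible-prefix".
Require Import Defs.
From HB Require Import structures.
From mathcomp Require Import all_boot all_order all_algebra.
From mathcomp Require Import all_classical all_reals all_analysis.
From mathcomp Require Import ring lra measurable_realfun.
Import Order.TTheory GRing.Theory Num.Theory.
Import numFieldNormedType.Exports.
Local Open Scope classical_set_scope.
Local Open Scope ring_scope.
Section P15.
Variable R : realType.
Variable d : nat.
Local Notation T := (d.-tuple R).

Lemma meas_box (P : 'I_d -> set R) : (forall i, measurable (P i)) ->
  measurable [set x : T | forall i, P i (tnth x i)].
Proof.
move=> mP.
have -> : [set x : T | forall i, P i (tnth x i)] =
   \bigcap_(i in [set: 'I_d]) (setT `&` (fun x : T => tnth x i) @^-1` P i).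
  apply/seteqP; split => x /=.
    by move=> H i _; split.
  by move=> H i; have [] := H i I.
apply: (fin_bigcap_measurable (D := [set: 'I_d])).
  exact: finite_finset.
move=> i _; by apply: (measurable_tnth i).
Qed.

Lemma meas_cube : measurable (@cube R d).
Proof.
have -> : @cube R d = [set x : T | forall i, [set` `[0%R, 1%R]] (tnth x i)].
  rewrite /cube; apply/seteqP; split => x /= H i; have := H i; by rewrite /= in_itv.
by apply: (meas_box (fun _ : 'I_d => [set` `[0%R, 1%R]])) => i; exact: measurable_itv.
Qed.


Lemma prod_cst_ord (c : R) : (\prod_(i < d) c = c ^+ d)%R.
Proof. by rewrite -[in RHS](card_ord d) -prodr_const. Qed.

Lemma pow_bound n (e : R) : (0 <= e <= 1 -> (1 + e) ^+ n <= 1 + e * (2 ^+ n - 1))%R.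
Proof.
move=> /andP[e0 e1]; elim: n => [|n IH]; first by rewrite !expr0 subrr mulr0 addr0.
have p1 : (1 <= (2:R) ^+ n)%R by apply: exprn_ege1; lra.
rewrite exprS [X in (_ <= 1 + e * (X - 1))%R]exprS.
set p := ((2:R) ^+ n) in IH p1 *.
set q := ((1 + e) ^+ n) in IH *.
have h2 : (0 <= e * (1 - e) * (p - 1))%R.
  by apply: mulr_ge0; [apply: mulr_ge0|]; lra.
have h3 : ((1 + e) * q <= (1 + e) * (1 + e * (p - 1)))%R.
  by apply: ler_wpM2l; lra.
lra.
Qed.

Lemma le1_of_pow (c : R) : (forall e, 0 < e -> c <= (1 + e) ^+ d)%R -> (c <= 1)%R.
Proof.
move=> H; rewrite leNgt; apply/negP => c1.
have p1 : (1 <= (2:R) ^+ d)%R by apply: exprn_ege1; lra.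
set p := ((2:R) ^+ d) in p1.
set e := Num.min 1%R ((c - 1) / p).
have e0 : (0 < e)%R by rewrite lt_min ltr01 /= divr_gt0 //; lra.
have e1 : (e <= 1)%R by rewrite ge_min lexx.
have e2 : (e * p <= c - 1)%R.
  have : (e <= (c - 1) / p)%R by rewrite ge_min lexx orbT.
  by rewrite ler_pdivlMr //; lra.
have hc := H e e0.
have hb := @pow_bound d e; rewrite -/p in hb.
have e01 : (0 <= e <= 1)%R by rewrite e1 andbT ltW.
have hb' := hb e01.
have h4 : (e * (p - 1) < e * p)%R by rewrite ltr_pM2l //; lra.
lra.
Qed.


Lemma meas_hbox (a b : T) :
  measurable [set x : T | forall i, (tnth a i < tnth x i <= tnth b i)%R].
Proof.
have -> : [set x : T | forall i, (tnth a i < tnth x i <= tnth b i)%R] =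
   [set x : T | forall i, [set` `]tnth a i, tnth b i]] (tnth x i)].
  apply/seteqP; split => x /= H i; have := H i; by rewrite /= in_itv.
by apply: (meas_box (fun i : 'I_d => [set` `]tnth a i, tnth b i]])) => i; exact: measurable_itv.
Qed.

Variable lam : {measure set T -> \bar R}.
Hypothesis Hlam : is_lebesgue lam.

Lemma lam_cube : lam (@cube R d) = 1%E.
Proof.
have up : forall e, (0 < e)%R -> (lam cube <= ((1+e)^+d)%:E)%E.
  move=> e e0.
  pose a : T := [tuple (-e)%R | i < d]; pose b : T := [tuple 1%R | i < d].
  have hab : forall i, (tnth a i <= tnth b i)%R by move=> i; rewrite !tnth_mktuple; lra.
  have := Hlam a b hab.
  rewrite (eq_bigr (fun=> 1 + e)%R); last by move=> i _; rewrite !tnth_mktuple opprK.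
  rewrite prod_cst_ord => <-.
  apply: le_measure; rewrite ?inE; [exact: meas_cube | exact: meas_hbox |].
  move=> x cx i; rewrite !tnth_mktuple; have := cx i; move=> /andP[h1 h2].
  by rewrite h2 andbT; lra.
have lo : (1 <= lam cube)%E.
  pose a : T := [tuple 0%R | i < d]; pose b : T := [tuple 1%R | i < d].
  have hab : forall i, (tnth a i <= tnth b i)%R by move=> i; rewrite !tnth_mktuple; lra.
  have := Hlam a b hab.
  rewrite (eq_bigr (fun=> 1)%R); last by move=> i _; rewrite !tnth_mktuple subr0.
  rewrite prod_cst_ord expr1n => <-.
  apply: le_measure; rewrite ?inE; [exact: meas_hbox | exact: meas_cube |].
  move=> x cx i; have := cx i; rewrite !tnth_mktuple => /andP[h1 h2].
  by rewrite h2 andbT ltW.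
have := up 1%R ltr01.
case E : (lam cube) lo => [r| |] //=; rewrite ?lee_fin => lo _.
  congr EFin; apply/eqP; rewrite eq_le lo andbT.
  apply: le1_of_pow => e e0; by have := up e e0; rewrite E lee_fin.
Qed.


Variable f : T -> R.
Hypothesis f_meas : measurable_fun (@cube R d) f.
Variable Mf : R.
Hypothesis HMf : forall x, cube x -> (`|f x| <= Mf)%R.
Variable eps : R.
Hypothesis Heps : (0 < eps)%R.

Let h := fun x => (f x / eps)%R.

Lemma meas_h : measurable_fun (@cube R d) h.
Proof. exact: (measurable_realfun.measurable_funM f_meas (measurable_cst eps^-1)). Qed.

Lemma meas_eh (k : R) : measurable_fun (@cube R d) (fun x => (expR (h x) * k)%:E).
Proof.
apply/measurable_realfun.measurable_EFinP; apply: measurable_realfun.measurable_funM; last exact: measurable_cst.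
apply: measurableT_comp; last exact: meas_h. exact: measurable_realfun.measurable_expR.
Qed.

Lemma h_bound x : cube x -> (`|h x| <= Mf / eps)%R.
Proof.
move=> cx; rewrite /h normrM [`|eps^-1|]gtr0_norm ?invr_gt0 //.
apply: ler_wpM2r; [by rewrite invr_ge0 ltW | exact: HMf].
Qed.

Lemma int_eh_bounds : ((expR (- (Mf / eps)))%:E <= \int[lam]_(x in cube) (expR (h x))%:E <= (expR (Mf / eps))%:E)%E.
Proof.
have me : measurable_fun (@cube R d) (fun x => (expR (h x))%:E).
  by have := meas_eh 1; under eq_fun do rewrite mulr1.
apply/andP; split.
  rewrite -[X in (X <= _)%E](mule1 _) -lam_cube -integral_cst; last exact: meas_cube.
  apply: ge0_le_integral => //; first exact: meas_cube.
  - by move=> x _; rewrite /cst lee_fin expR_ge0.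
  - move=> x cx /=; rewrite lee_fin ler_expR.
    by have := h_bound x cx; rewrite ler_norml => /andP[].
rewrite -[X in (_ <= X)%E](mule1 _) -lam_cube -integral_cst; last exact: meas_cube.
apply: ge0_le_integral => //; first exact: meas_cube.
- move=> x cx /=; rewrite lee_fin ler_expR.
  by have := h_bound x cx; rewrite ler_norml => /andP[].
Qed.

Lemma Z_int : (\int[lam]_(x in cube) (expR (h x))%:E = (Zh lam h)%:E)%E.
Proof.
rewrite /Zh /Rintegral; have /andP[lo up] := int_eh_bounds.
rewrite fineK // ge0_fin_numE ?(le_trans _ lo) ?lee_fin ?expR_ge0 //.
by apply: le_lt_trans up _; exact: ltry.
Qed.

Lemma Z_pos : (0 < Zh lam h)%R.
Proof.
have /andP[lo _] := int_eh_bounds; rewrite Z_int lee_fin in lo.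
by apply: lt_le_trans lo; exact: expR_gt0.
Qed.


Lemma P_le (A : set T) (k : R) : measurable A -> (0 <= k)%R ->
  (forall x, A x -> cube x -> expR (h x) / Zh lam h <= k)%R -> (Ph lam h A <= k%:E)%E.
Proof.
move=> mA k0 Hk; rewrite /Ph.
have mAc : measurable (A `&` cube) := measurableI _ _ mA meas_cube.
apply: (@le_trans _ _ (\int[lam]_(x in A `&` cube) (cst k%:E x))%E).
  apply: ge0_le_integral => //.
  - by move=> x _; rewrite lee_fin divr_ge0 ?expR_ge0 // ltW // Z_pos.
  - exact: (measurable_funS meas_cube (@subIsetr _ _ _) (meas_eh (Zh lam h)^-1)).
  - by move=> x [Ax cx]; rewrite lee_fin; exact: Hk.
rewrite integral_cst //.
have H1 : (lam (A `&` cube) <= 1)%E.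
  rewrite -lam_cube; apply: le_measure; rewrite ?inE //; exact: meas_cube.
rewrite -[X in (_ <= X)%E]mule1; apply: lee_wpmul2l => //; by rewrite lee_fin.
Qed.

Lemma P_cube : Ph lam h cube = 1%E.
Proof.
rewrite /Ph setIid.
under eq_integral do rewrite mulrC EFinM.
rewrite ge0_integralZl_EFin //.
- by rewrite Z_int -EFinM mulVf // gt_eqF // Z_pos.
- exact: meas_cube.
- by have := meas_eh 1; under eq_fun do rewrite mulr1.
- by rewrite invr_ge0 ltW // Z_pos.
Qed.

Lemma P_compl : Ph lam h (~` cube) = 0%E.
Proof. by rewrite /Ph setICl integral_set0. Qed.


Lemma exp_helper (z k y : R) : (0 < z)%R -> (0 < k)%R -> (y <= ln z + ln k)%R ->
  (expR y / z <= k)%R.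
Proof.
move=> z0 k0 hy; rewrite ler_pdivrMr //.
apply: (le_trans (y := expR (ln z + ln k))); first by rewrite ler_expR.
by rewrite expRD !lnK ?posrE // mulrC.
Qed.

Lemma meas_fle (c : R) : measurable [set x | cube x /\ (f x <= c)%R].
Proof.
have -> : [set x | cube x /\ (f x <= c)%R] = cube `&` f @^-1` [set` `]-oo, c]].
  by apply/seteqP; split => x /= [H1 H2]; split => //; move: H2; rewrite in_itv.
by apply: f_meas; [exact: meas_cube | exact: measurable_itv].
Qed.

Lemma meas_flt (c : R) : measurable [set x | cube x /\ (f x < c)%R].
Proof.
have -> : [set x | cube x /\ (f x < c)%R] = cube `&` f @^-1` [set` `]-oo, c[].
  by apply/seteqP; split => x /= [H1 H2]; split => //; move: H2; rewrite in_itv.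
by apply: f_meas; [exact: meas_cube | exact: measurable_itv].
Qed.

Lemma h_le (x : T) (c : R) : (f x <= eps * c)%R -> (h x <= c)%R.
Proof. by move=> H; rewrite /h ler_pdivrMr // mulrC. Qed.

Lemma P_lvl (dl : R) (A : set T) : (0 < dl)%R -> measurable A ->
  (forall x, A x -> cube x -> f x <= eps * Lh lam h - eps * ln (1 / dl))%R ->
  (Ph lam h A <= dl%:E)%E.
Proof.
move=> dl0 mA HA; apply: P_le => //; first exact: ltW.
move=> x Ax cx; apply: exp_helper => //; first exact: Z_pos.
apply: h_le.
by have := HA x Ax cx; rewrite -mulrBr div1r lnV ?posrE // opprK /Lh.
Qed.


Variable Q : probability T R.

Lemma partA (delta : R) : (0 < delta)%R ->
  (Q [set x | cube x /\ ((f x)%:E <= (eps * Lh lam h - eps * ln (1 / delta))%:E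
                    - eps%:E * Dsuplog (Ph lam h) Q)%E] <= delta%:E)%E.
Proof.
move=> dl0.
set b := (eps * Lh lam h - eps * ln (1 / delta))%R.
have D0 : (0 <= Dsuplog (Ph lam h) Q)%E.
  by apply: le_ereal_inf_tmp => y [c [c0 _] <-]; rewrite lee_fin.
case DE : (Dsuplog (Ph lam h) Q) D0 => [r| |] // D0; last first.
  have -> : [set x | cube x /\ ((f x)%:E <= b%:E - eps%:E * +oo)%E] = set0.
    apply/seteqP; split => x //= [_].
    by rewrite muleC gt0_mulye ?lte_fin // addeNy leeNy_eq.
  by rewrite measure0 lee_fin ltW.
rewrite lee_fin in D0.
set A := [set x | cube x /\ (f x <= b - eps * r)%R].
apply: (@le_trans _ _ (Q A)).
  rewrite le_eqVlt; apply/orP; left; apply/eqP; congr (Q _).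
have mA : measurable A := meas_fle _.
have PA : (Ph lam h A <= (delta * expR (- r))%:E)%E.
  apply: P_le => //; first by rewrite mulr_ge0 ?expR_ge0 ?ltW.
  move=> x [_ Hx] cx; apply: exp_helper; [exact: Z_pos | by rewrite mulr_gt0 ?expR_gt0 | ].
  apply: h_le; rewrite lnM ?posrE ?expR_gt0 // expRK.
  move: Hx; rewrite /b /Lh div1r lnV ?posrE //.
  suff -> : (eps * (ln (Zh lam h) + (ln delta + - r)) =
     eps * ln (Zh lam h) - eps * - ln delta - eps * r)%R by [].
  by ring.
have qfin : Q A \is a fin_num.
  by rewrite ge0_fin_numE ?measure_ge0 // (le_lt_trans (probability_le1 _ mA)) ?ltry.
have key : forall c, (0 <= c /\ exists g : T -> R, measurable_fun setT g /\
       (forall A, measurable A -> Ph lam h A = (\int[Q]_(x in A) (expR (g x))%:E)%E) /\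
       {ae Q, forall x, `|g x| <= c}) -> (fine (Q A) <= delta * expR (c - r))%R.
  move=> c [c0 [g [mg [Hg Hae]]]].
  have H1 : ((expR (- c))%:E * Q A <= Ph lam h A)%E.
    rewrite (Hg A mA) -integral_cst //.
    apply: ae_ge0_le_integral => //.
    - by move=> x _; rewrite /cst lee_fin expR_ge0.
    - apply/measurable_EFinP; apply: (measurable_funS measurableT) => //.
      by apply: measurableT_comp => //; exact: measurable_expR.
    - apply: filterS Hae => x Hx _; rewrite /cst lee_fin ler_expR.
      by move: Hx; rewrite ler_norml => /andP[].
  have := le_trans H1 PA; rewrite -(fineK qfin) -EFinM lee_fin => H2.
  have E1 : (expR c * expR (- c) = 1)%R by rewrite -expRD subrr expR0.
  apply: (@le_trans _ _ (expR c * (expR (- c) * fine (Q A)))%R).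
    by rewrite mulrA E1 mul1r.
  rewrite (_ : (delta * expR (c - r) = expR c * (delta * expR (- r)))%R); last first.
    by rewrite expRD mulrCA.
  by rewrite ler_pM2l ?expR_gt0.
rewrite -(fineK qfin) lee_fin leNgt; apply/negP => qd.
set q := fine (Q A) in key qd.
have q0 : (0 < q)%R by apply: lt_trans qd.
set t := ln (q / delta).
have t0 : (0 < t)%R by apply: ln_gt0; rewrite ltr_pdivlMr // mul1r.
have : (Dsuplog (Ph lam h) Q < (r + t)%:E)%E by rewrite DE lte_fin ltrDl.
move/ereal_inf_lt => [_ [c Sc <-]]; rewrite lte_fin => ct.
have := key c Sc.
have : (delta * expR (c - r) < delta * expR t)%R.
  by rewrite ltr_pM2l // ltr_expR; lra.
rewrite /t lnK ?posrE ?divr_gt0 //.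
have -> : (delta * (q / delta) = q)%R by rewrite mulrC divfK ?gt_eqF.
lra.
Qed.


Lemma partB (delta : R) : (0 < delta)%R ->
  (Q [set x | cube x /\ (f x <= eps * Lh lam h - eps * ln (1 / delta))%R]
     <= delta%:E + Dtv (Ph lam h) Q)%E.
Proof.
move=> dl0; set A := [set x | _].
have mA : measurable A := meas_fle _.
have PA : (Ph lam h A <= delta%:E)%E by apply: P_lvl => // x [_ H] _.
have P0 : (0 <= Ph lam h A)%E.
  by apply: integral_ge0 => x _; rewrite lee_fin divr_ge0 ?expR_ge0 // ltW // Z_pos.
have pfin : Ph lam h A \is a fin_num.
  by rewrite ge0_fin_numE // (le_lt_trans PA) ?ltry.
have qfin : Q A \is a fin_num.
  by rewrite ge0_fin_numE ?measure_ge0 // (le_lt_trans (probability_le1 _ mA)) ?ltry.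
have Hsup : (`|(Ph lam h A - Q A)%E|%E <= Dtv (Ph lam h) Q)%E.
  by apply: ereal_sup_ubound; exists A.
move: Hsup PA; rewrite -(fineK pfin) -(fineK qfin) -EFinB abse_EFin lee_fin.
set p := fine (Ph lam h A); set q := fine (Q A) => Hsup PA.
apply: (@le_trans _ _ (delta%:E + `|p - q|%:E)%E); last exact: leeD2l.
rewrite -EFinD lee_fin.
have := ler_norm (q - p); rewrite distrC; lra.
Qed.


Lemma meas_euclid : measurable_fun [set: T * T] (fun z : T * T => euclid z.1 z.2).
Proof.
rewrite /euclid.
apply: measurableT_comp; first exact: (continuous_measurable_fun (@sqrt_continuous R)).
apply: measurable_sum => i.
apply: measurable_funX; apply: measurable_funB.
- by apply: (measurableT_comp (f := fun x : T => tnth x i) (g := fst)) => //; exact: measurable_tnth.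
- by apply: (measurableT_comp (f := fun x : T => tnth x i) (g := snd)) => //; exact: measurable_tnth.
Qed.

Lemma euclid_ge0 (x y : T) : (0 <= euclid x y)%R.
Proof. exact: sqrtr_ge0. Qed.

Lemma lip_facts : (exists L, lipschitz_on_cube f L) ->
  (0 <= lip_const f)%R /\
  forall x y, cube x -> cube y -> (`|f x - f y| <= lip_const f * euclid x y)%R.
Proof.
move=> [L HL].
have ne : [set L | lipschitz_on_cube f L] !=set0 by exists L.
have l0 : (0 <= lip_const f)%R.
  by apply: lb_le_inf => // y [y0 _].
split => // x y cx cy.
apply/ler_addgt0Pr => e e0.
have := euclid_ge0 x y; set u := euclid x y => u0.
have e1 : (0 < e / (u + 1))%R by rewrite divr_gt0 //; lra.
have : (inf [set L | lipschitz_on_cube f L] < lip_const f + e / (u + 1))%R.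
  by rewrite /lip_const ltrDl.
move/(inf_lt ne) => [L' [L'0 HL'] lt'].
have H1 := HL' x y cx cy; rewrite -/u in H1.
have H2 : (L' * u <= (lip_const f + e / (u + 1)) * u)%R by rewrite ler_wpM2r // ltW.
have H3 : (e / (u + 1) * u <= e)%R.
  by rewrite mulrAC ler_pdivrMr ?ler_pM2l; lra.
move: H2; rewrite mulrDl; lra.
Qed.


Lemma partC_eta (delta w eta : R) : (0 < delta)%R -> (0 <= w)%R -> (0 < eta)%R ->
  (exists L, lipschitz_on_cube f L) ->
  (W1 (Ph lam h) Q < (w + eta)%:E)%E ->
  (Q [set x | cube x /\ (f x < (eps * Lh lam h - eps * ln (2 / delta))
       - 2 / delta * lip_const f * (w + eta))%R] <= delta%:E)%E.
Proof.
move=> dl0 w0 et0 hL hW.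
have [l0 lip] := lip_facts hL.
set l := lip_const f in l0 lip *.
set t := (eps * Lh lam h - eps * ln (2 / delta))%R.
set B := [set x | _].
have mB : measurable B := meas_flt _.
move/ereal_inf_lt: hW => [_ [pi [[cp1 cp2] ->]] hint].
set r := (2 * (w + eta) / delta)%R.
have r0 : (0 < r)%R by rewrite /r divr_gt0 // mulr_gt0 //; lra.
set S := [set x | cube x /\ (f x <= t)%R].
have mS : measurable S := meas_fle t.
set E := [set z : T * T | (r < euclid z.1 z.2)%R].
have mE : measurable E.
  have := meas_euclid measurableT _ (measurable_itv `]r, +oo[); rewrite setTI.
  congr measurable; apply/seteqP; split => z /=; by rewrite in_itv /= andbT.
have PS : (Ph lam h S <= (delta / 2)%:E)%E.
  apply: P_lvl => //; first by rewrite divr_gt0.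
  by move=> x [_ H] _; rewrite div1r invf_div.
have lr : (2 / delta * l * (w + eta) = l * r)%R.
  by rewrite /r; field; rewrite gt_eqF.
have sub : setT `*` B `<=` ((S `*` setT) `|` (~` cube `*` setT)) `|` E.
  move=> [x y] [_ [cy hy]] /=.
  have [cx|ncx] := pselect (cube x); last by left; right.
  have [fxt|fxt] := leP (f x) t; first by left; left.
  right; rewrite /E /= ltNge; apply/negP => hle.
  have h1 := ler_wpM2l l0 hle.
  have h2 := lip x y cx cy.
  have h3 := ler_norm (f x - f y).
  lra.
have piE : (pi E <= (delta / 2)%:E)%E.
  have m1 : (r%:E * pi E <= \int[pi]_z (euclid z.1 z.2)%:E)%E.
    rewrite -integral_cst //.
    have me : measurable_fun [set: T * T] (fun z : T * T => (euclid z.1 z.2)%:E).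
      by apply/measurable_EFinP; exact: meas_euclid.
    apply: (@le_trans _ _ (\int[pi]_(z in E) (euclid z.1 z.2)%:E)%E).
      apply: ge0_le_integral => //.
      - by move=> z _; rewrite /cst lee_fin ltW.
      - exact: (measurable_funS measurableT (@subsetT _ _) me).
      - by move=> z Ez; rewrite /cst lee_fin ltW.
    apply: ge0_subset_integral => //.
    by move=> z _; rewrite lee_fin euclid_ge0.
  have pfin : pi E \is a fin_num.
    by rewrite ge0_fin_numE ?measure_ge0 // (le_lt_trans (probability_le1 _ mE)) ?ltry.
  have := le_lt_trans m1 hint; rewrite -(fineK pfin) -EFinM lte_fin lee_fin => H.
  have : (r * (delta / 2) = w + eta)%R.
    by rewrite /r mulrA divfK ?gt_eqF // mulrC mulrA mulVf // mul1r.
  move=> Hr; rewrite -(ler_pM2l r0) Hr; exact: ltW.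
rewrite -cp2 //.
have mU : measurable (((S `*` setT) `|` (~` cube `*` setT)) `|` E).
  by apply: measurableU => //; apply: measurableU; apply: measurableX => //; exact: measurableC meas_cube.
apply: (le_trans (le_measure _ _ _ sub)); rewrite ?inE //; first exact: measurableX.
apply: (le_trans (measureU2 _ _ _)) => //; first by apply: measurableU; apply: measurableX => //; exact: measurableC meas_cube.
apply: (le_trans (leeD (measureU2 _ _ _) (lexx _))); try by apply: measurableX => //; exact: measurableC meas_cube.
have e1 : pi (S `*` setT) = Ph lam h S := cp1 S mS.
have e2 : pi (~` cube `*` setT) = Ph lam h (~` cube) := cp1 _ (measurableC meas_cube).
have le1 : (pi (S `*` setT) <= (delta/2)%:E)%E by rewrite e1.
have le2 : (pi (~` cube `*` setT) <= 0%:E)%E by rewrite e2 P_compl.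
apply: (le_trans (leeD (leeD le1 le2) piE)).
by rewrite adde0 -EFinD -splitr.
Qed.


Lemma partC (delta : R) : (0 < delta <= 1)%R -> (exists L, lipschitz_on_cube f L) ->
   (Q [set x | cube x /\
      ((f x)%:E < (eps * Lh lam h - eps * ln (2 / delta))%:E
                   - (2 / delta * lip_const f)%:E * W1 (Ph lam h) Q)%E] <= delta%:E)%E.
Proof.
move=> /andP[dl0 dl1] hL; have [l0 lip] := lip_facts hL.
set t := (eps * Lh lam h - eps * ln (2 / delta))%R.
have W0 : (0 <= W1 (Ph lam h) Q)%E.
  apply: le_ereal_inf_tmp => y [pi [_ ->]]; apply: integral_ge0 => z _.
  by rewrite lee_fin euclid_ge0.
have k0 : (0 <= 2 / delta * lip_const f)%R by rewrite mulr_ge0 // divr_ge0 // ltW.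
case WE : (W1 (Ph lam h) Q) W0 => [w| |] // W0; last first.
  rewrite le_eqVlt in l0; case/orP: l0 => [/eqP l0|l0].
    have -> : [set x | cube x /\ ((f x)%:E < t%:E - (2 / delta * lip_const f)%:E * +oo)%E] = set0.
      apply/seteqP; split => // x0 [cx0]; rewrite -l0 mulr0 mul0e sube0 lte_fin => hx0.
      have : (Ph lam h cube <= (delta / 2)%:E)%E.
        apply: P_lvl => //; first by rewrite divr_gt0.
          exact: meas_cube.
        move=> y _ cy; have := lip y x0 cy cx0; rewrite -l0 mul0r normr_le0 subr_eq0 => /eqP ->.
        by rewrite div1r invf_div; apply: ltW.
      by rewrite P_cube lee_fin; lra.
    by rewrite measure0 lee_fin ltW.
  have -> : [set x | cube x /\ ((f x)%:E < t%:E - (2 / delta * lip_const f)%:E * +oo)%E] = set0.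
    apply/seteqP; split => // x0 [cx0].
    by rewrite muleC gt0_mulye ?lte_fin ?mulr_gt0 ?divr_gt0 ?invr_gt0.
  by rewrite measure0 lee_fin ltW.
rewrite lee_fin in W0.
set k := (2 / delta * lip_const f)%R in k0 *.
pose F := fun n : nat => [set x | cube x /\ (f x < t - k * (w + n.+1%:R^-1))%R].
have QF : forall n, (Q (F n) <= delta%:E)%E.
  move=> n; apply: partC_eta => //.
  by rewrite WE lte_fin ltrDl invr_gt0.
have mF : forall n, measurable (F n) by move=> n; exact: meas_flt.
have mU : measurable (\bigcup_n F n) := bigcupT_measurable F mF.
have eqU : [set x | cube x /\ ((f x)%:E < t%:E - k%:E * w%:E)%E] = \bigcup_n F n.
  apply/seteqP; split.
    move=> x [cx]; rewrite -EFinM -EFinB lte_fin => hx.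
    set g := (t - k * w - f x)%R.
    have g0 : (0 < g)%R by rewrite /g; lra.
    have e0 : (0 < g / (k + 1))%R by rewrite divr_gt0 //; lra.
    case: (near_infty_natSinv_lt (PosNum e0)) => N _ HN.
    have hN := HN N (leqnn N); rewrite /= in hN.
    exists N => //; split => //.
    have h1 : (k * N.+1%:R^-1 <= k * (g / (k + 1)))%R by rewrite ler_wpM2l // ltW.
    have kp : (0 < k + 1)%R by lra.
    have h2 : (k * (g / (k + 1)) < g)%R.
      rewrite -(ltr_pM2r kp).
      have -> : (k * (g / (k + 1)) * (k + 1) = k * g)%R by rewrite -mulrA divfK ?gt_eqF.
      nra.
    have gE : g = (t - k * w - f x)%R by [].
    have h3 : (k / N.+1%:R < t - k * w - f x)%R by rewrite -gE; exact: le_lt_trans h1 h2.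
    suff H : (f x < t - k * w - k / N.+1%:R)%R by rewrite mulrDr opprD addrA.
    move: h3; set u := (k / N.+1%:R)%R; move=> h3; clearbody u; lra.
  move=> x [n _ [cx hx]]; split => //; rewrite -EFinM -EFinB lte_fin.
  have : (0 <= k * n.+1%:R^-1)%R by rewrite mulr_ge0 // invr_ge0.
  move: hx; rewrite mulrDr opprD addrA => hx h0.
  apply: (lt_le_trans hx); by rewrite lerBlDr lerDl.
apply: (@le_trans _ _ (Q (\bigcup_n F n))).
  by rewrite le_eqVlt; apply/orP; left; apply/eqP; congr (Q _); exact: eqU.
have homo : {homo F : n m / (n <= m)%N >-> (n <= m)%O}.
  move=> n m nm; apply/subsetPset => x [cx hx]; split => //.
  have : (m.+1%:R^-1 <= n.+1%:R^-1 :> R)%R by rewrite lef_pV2 ?posrE ?ler_nat.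
  move/(ler_wpM2l k0) => hk.
  apply: (lt_le_trans hx); rewrite lerD2l lerN2 !mulrDr lerD2l //.
have cv := @nondecreasing_cvg_mu _ _ R Q F mF mU homo.
rewrite -(cvg_lim (@ereal_hausdorff R) cv).
apply: lime_le; first exact: cvgP cv.
by apply: nearW => n; exact: QF.
Qed.

End P15.


Theorem proposition15 (R : realType) (d : nat)
  (lam : {measure set (d.-tuple R) -> \bar R}) (Hlam : is_lebesgue lam)
  (f : d.-tuple R -> R)
  (f_meas : measurable_fun (@cube R d) f)
  (f_bdd : exists M : R, forall x, cube x -> `|f x| <= M)
  (Q : probability (d.-tuple R) R) (HQ : Q (@cube R d) = 1%E)
  (delta eps : R) (Hdelta : 0 < delta <= 1) (Heps : 0 < eps) :
  let h := fun x => f x / eps in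
  let P := Ph lam h in
  (* (a) *)
  (Q [set x | cube x /\
      ((f x)%:E <= (eps * Lh lam h - eps * ln (1 / delta))%:E
                    - eps%:E * Dsuplog P Q)%E] <= delta%:E)%E /\
  (* (b) *)
  (Q [set x | cube x /\
      (f x <= eps * Lh lam h - eps * ln (1 / delta))%R]
     <= delta%:E + Dtv P Q)%E /\
  (* (c) *)
  ((exists L, lipschitz_on_cube f L) ->
   Q [set x | cube x /\
      ((f x)%:E < (eps * Lh lam h - eps * ln (2 / delta))%:E
                   - (2 / delta * lip_const f)%:E * W1 P Q)%E] <= delta%:E)%E.

Proof.
move=> h P.
have [Mf HMf] := f_bdd.
have hd : (0 < delta)%R by case/andP: Hdelta.
split; first exact: (@partA R d lam Hlam f f_meas Mf HMf eps Heps Q delta hd).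
split; first exact: (@partB R d lam Hlam f f_meas Mf HMf eps Heps Q delta hd).
exact: (@partC R d lam Hlam f f_meas Mf HMf eps Heps Q delta Hdelta).
Qed.
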